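(* If $L$ is a d-reduced $\kappa$-frame, then for every $a\in L$ the congruence $\nabla_a$ is clear; equivalently, $L/\nabla_a$ is d-reduced.
   Context: $\kappa$ is a fixed regular cardinal; a $\kappa$-frame is a bounded distributive lattice having joins of all subsets of cardinality $<\kappa$ and satisfying the frame distributive law for such joins. A $\kappa$-ideal is a downset in which every subset of cardinality $<\kappa$ has an upper bound. A congruence is an equivalence relation that is a sub-$\kappa$-frame of $L\times L$. $\nabla_a=\{(x,y)\mid x\vee a=y\vee a\}$. For a $\kappa$-ideal $I$, $\partial_I=\{(a,b)\mid\forall x\in L:\ a\wedge x\in I\iff b\wedge x\in I\}$; a congruence is clear if it equals $\partial_I$ for some $\kappa$-ideal $I$. A $\kappa$-frame $M$ is d-reduced if $\mathfrak{D}_M=\{(a,b)\mid\forall x\in M:\ a\wedge x=0\iff b\wedge x=0\}$ is the diagonal. *)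

(* Defs.v *)
From Stdlib Require Import Classical.

(** * The regular cardinal kappa
    kappa is represented by a type [K] whose cardinality is kappa.
    A type [X] has cardinality < kappa iff it injects into [K] but
    does not surject onto [K]. *)

Definition injective {A B : Type} (f : A -> B) : Prop :=
  forall x y, f x = f y -> x = y.
Definition surjective {A B : Type} (f : A -> B) : Prop :=
  forall y, exists x, f x = y.

Definition card_lt (X K : Type) : Prop :=
  (exists f : X -> K, injective f) /\ ~ (exists g : X -> K, surjective g).

Definition regular_cardinal (K : Type) : Prop :=
  (exists f : nat -> K, injective f) /\
  (forall (I : Type) (F : I -> Type),
      card_lt I K -> (forall i, card_lt (F i) K) -> card_lt {i : I & F i} K).

Definition small (K : Type) {T : Type} (S : T -> Prop) : Prop :=
  card_lt {x : T | S x} K.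

(** * kappa-frames
    A bounded lattice (given as a partial order with binary meets/joins,
    top and bottom) with a join operation [sup] which is required to be the
    least upper bound on every subset of cardinality < kappa (its value on
    large subsets is irrelevant), satisfying the frame distributive law
    [a /\ sup S = sup {a /\ s | s in S}] for such subsets.  (Distributivity
    of the lattice follows from this law applied to 2-element subsets.) *)
Record kFrame (K : Type) := KFrame {
  car :> Type;
  le : car -> car -> Prop;
  meet : car -> car -> car;
  join : car -> car -> car;
  top : car;
  bot : car;
  sup : (car -> Prop) -> car;
  le_refl : forall x, le x x;
  le_trans : forall x y z, le x y -> le y z -> le x z;
  le_antisym : forall x y, le x y -> le y x -> x = y;
  meet_glb : forall x y z, le z (meet x y) <-> (le z x /\ le z y);
  join_lub : forall x y z, le (join x y) z <-> (le x z /\ le y z);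
  top_max : forall x, le x top;
  bot_min : forall x, le bot x;
  sup_ub : forall S, small K S -> forall s, S s -> le s (sup S);
  sup_least : forall S, small K S -> forall u, (forall s, S s -> le s u) -> le (sup S) u;
  frame_distr : forall (a : car) (S : car -> Prop), small K S ->
      meet a (sup S) = sup (fun y => exists s, S s /\ y = meet a s)
}.

Arguments le {K} _ _ _.
Arguments meet {K} _ _ _.
Arguments join {K} _ _ _.
Arguments top {K} _.
Arguments bot {K} _.
Arguments sup {K} _ _.

Section Defs.
Context {K : Type} (L : kFrame K).

(** A congruence: an equivalence relation that is a sub-kappa-frame of L x L
    (contains (0,0) and (1,1), closed under binary meets and joins, and under
    joins of subsets of cardinality < kappa, computed componentwise). *)
Definition congruence (th : L -> L -> Prop) : Prop :=
  (forall x, th x x) /\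
  (forall x y, th x y -> th y x) /\
  (forall x y z, th x y -> th y z -> th x z) /\
  th (bot L) (bot L) /\ th (top L) (top L) /\
  (forall a b c d, th a b -> th c d -> th (meet L a c) (meet L b d)) /\
  (forall a b c d, th a b -> th c d -> th (join L a c) (join L b d)) /\
  (forall S : L * L -> Prop, small K S -> (forall p, S p -> th (fst p) (snd p)) ->
     th (sup L (fun x => exists p, S p /\ x = fst p))
        (sup L (fun y => exists p, S p /\ y = snd p))).

Definition nabla (a : L) : L -> L -> Prop :=
  fun x y => join L x a = join L y a.

Definition kIdeal (I : L -> Prop) : Prop :=
  (forall x y, le L x y -> I y -> I x) /\
  (forall S : L -> Prop, small K S -> (forall s, S s -> I s) ->
     exists u, I u /\ forall s, S s -> le L s u).

Definition partialI (I : L -> Prop) : L -> L -> Prop :=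
  fun a b => forall x, I (meet L a x) <-> I (meet L b x).

Definition clear (th : L -> L -> Prop) : Prop :=
  congruence th /\
  exists I, kIdeal I /\ forall a b, th a b <-> partialI I a b.

(** D_L = {(a,b) | forall x, a /\ x = 0 <-> b /\ x = 0}; L is d-reduced if
    D_L is the diagonal. *)
Definition dReduced : Prop :=
  forall a b, (forall x, meet L a x = bot L <-> meet L b x = bot L) -> a = b.

(** d-reducedness of the quotient L / nabla_a, written on representatives:
    the classes are [x] with [x] = [y] iff x \/ a = y \/ a, meets are computed
    on representatives and the bottom class is [0], so [b] /\ [x] = [0] iff
    (b /\ x) \/ a = 0 \/ a. *)
Definition quotient_nabla_dReduced (a : L) : Prop :=
  forall b c,
    (forall x, nabla a (meet L b x) (bot L) <-> nabla a (meet L c x) (bot L)) ->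
    nabla a b c.

End Defs.

(* Main.v *)
Require Import Defs.
From Stdlib Require Import Classical ClassicalEpsilon.

Lemma sig_eq' {T : Type} (P : T -> Prop) (p q : {x | P x}) :
  proj1_sig p = proj1_sig q -> p = q.
Proof.
  destruct p as [x hx], q as [y hy]; simpl; intros ->.
  f_equal; apply proof_irrelevance.
Qed.

Lemma small_two (K : Type) (HK : regular_cardinal K) (T : Type) (u v : T) (S : T -> Prop) :
  (forall y, S y -> y = u \/ y = v) -> small K S.
Proof.
  intros H. destruct HK as [[f fi] _]. split.
  - exists (fun p => if excluded_middle_informative (proj1_sig p = u) then f 0 else f 1).
    intros p q. destruct (excluded_middle_informative (proj1_sig p = u)) as [e1|e1];
    destruct (excluded_middle_informative (proj1_sig q = u)) as [e2|e2]; intros E.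
    + apply sig_eq'; congruence.
    + apply fi in E; discriminate.
    + apply fi in E; discriminate.
    + apply sig_eq'. destruct (H _ (proj2_sig p)); [contradiction|].
      destruct (H _ (proj2_sig q)); [contradiction|]. congruence.
  - intros [g gs].
    destruct (gs (f 0)) as [p0 e0]. destruct (gs (f 1)) as [p1 e1].
    destruct (gs (f 2)) as [p2 e2].
    assert (N01 : p0 <> p1) by (intro E; assert (f 0 = f 1) as Q by congruence; apply fi in Q; discriminate).
    assert (N02 : p0 <> p2) by (intro E; assert (f 0 = f 2) as Q by congruence; apply fi in Q; discriminate).
    assert (N12 : p1 <> p2) by (intro E; assert (f 1 = f 2) as Q by congruence; apply fi in Q; discriminate).
    destruct (H _ (proj2_sig p0)) as [a0|a0]; destruct (H _ (proj2_sig p1)) as [a1|a1];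
    destruct (H _ (proj2_sig p2)) as [a2|a2];
    first [ apply N01; apply sig_eq'; congruence
          | apply N02; apply sig_eq'; congruence
          | apply N12; apply sig_eq'; congruence ].
Qed.

Lemma small_image (K : Type) (HK : regular_cardinal K) (A B : Type) (S : A -> Prop)
  (T : B -> Prop) (F : A -> B) :
  small K S -> (forall y, T y -> exists s, S s /\ y = F s) -> small K T.
Proof.
  intros [[i ii] ns] H. destruct HK as [[f fi] _].
  set (c := fun t : {y | T y} =>
        proj1_sig (constructive_indefinite_description _ (H _ (proj2_sig t)))).
  assert (cS : forall t, S (c t)).
  { intro t. unfold c. exact (proj1 (proj2_sig (constructive_indefinite_description _ (H _ (proj2_sig t))))). }
  assert (cF : forall t, proj1_sig t = F (c t)).
  { intro t. unfold c. exact (proj2 (proj2_sig (constructive_indefinite_description _ (H _ (proj2_sig t))))). }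
  set (c' := fun t => exist S (c t) (cS t)).
  assert (ci : injective c').
  { intros t t' E. apply sig_eq'. rewrite (cF t), (cF t').
    apply (f_equal (@proj1_sig _ _)) in E. simpl in E. congruence. }
  split.
  - exists (fun t => i (c' t)). intros t t' E. apply ci, ii, E.
  - intros [g gs]. apply ns.
    exists (fun s => match excluded_middle_informative (exists t, c' t = s) with
             | left e => g (proj1_sig (constructive_indefinite_description _ e))
             | right _ => f 0 end).
    intro k. destruct (gs k) as [t <-]. exists (c' t).
    destruct (excluded_middle_informative (exists t0, c' t0 = c' t)) as [e|n].
    + destruct (constructive_indefinite_description _ e) as [t0 h0]; simpl.
      apply ci in h0. subst; reflexivity.
    + exfalso; apply n; eauto.
Qed.

Section Lat.
End Lat.

Lemma meet_l K (L : kFrame K) (x y : L) : le L (meet L x y) x.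
Proof. apply (proj1 (meet_glb K L x y _ ) (le_refl K L _)). Qed.
Lemma meet_r K (L : kFrame K) (x y : L) : le L (meet L x y) y.
Proof. apply (proj1 (meet_glb K L x y _ ) (le_refl K L _)). Qed.
Lemma join_l K (L : kFrame K) (x y : L) : le L x (join L x y).
Proof. apply (proj1 (join_lub K L x y _ ) (le_refl K L _)). Qed.
Lemma join_r K (L : kFrame K) (x y : L) : le L y (join L x y).
Proof. apply (proj1 (join_lub K L x y _ ) (le_refl K L _)). Qed.
Lemma meet_intro K (L : kFrame K) (x y z : L) : le L z x -> le L z y -> le L z (meet L x y).
Proof. intros; apply meet_glb; auto. Qed.
Lemma join_intro K (L : kFrame K) (x y z : L) : le L x z -> le L y z -> le L (join L x y) z.
Proof. intros; apply join_lub; auto. Qed.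

Lemma distr K (HK : regular_cardinal K) (L : kFrame K) (x y z : L) :
  le L (meet L x (join L y z)) (join L (meet L x y) (meet L x z)).
Proof.
  set (S := fun s : L => s = y \/ s = z).
  assert (Ss : small K S) by (apply (small_two K HK _ y z); auto).
  assert (le L (join L y z) (sup L S)).
  { apply join_intro; apply sup_ub; unfold S; auto. }
  eapply le_trans.
  - apply meet_intro; [apply meet_l|]. eapply le_trans; [apply meet_r|]. exact H.
  - rewrite frame_distr by exact Ss. apply sup_least.
    + apply (small_two K HK _ (meet L x y) (meet L x z)).
      intros w [s [[->| ->] ->]]; auto.
    + intros w [s [[->| ->] ->]]; [apply join_l|apply join_r].
Qed.

Lemma K2 K (HK : regular_cardinal K) (L : kFrame K) (c e a : L) :
  le L (meet L (join L c a) (join L e a)) (join L (meet L c e) a).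
Proof.
  eapply le_trans; [apply distr; exact HK|]. apply join_intro.
  - eapply le_trans.
    + apply meet_intro; [apply meet_r | apply meet_l].
    + eapply le_trans; [apply distr; exact HK|]. apply join_intro.
      * eapply le_trans; [|apply join_l]. apply meet_intro; [apply meet_r|apply meet_l].
      * eapply le_trans; [apply meet_r|apply join_r].
  - eapply le_trans; [apply meet_r|apply join_r].
Qed.

Lemma join_le_eq K (L : kFrame K) (y a : L) : join L y a = a <-> le L y a.
Proof.
  split.
  - intro E; rewrite <- E; apply join_l.
  - intro H; apply le_antisym; [apply join_intro; auto; apply le_refl | apply join_r].
Qed.

Theorem mainTheorem17 (K : Type) (HK : regular_cardinal K) (L : kFrame K) :
  dReduced L ->
  forall a : L, clear L (nabla L a) /\ quotient_nabla_dReduced L a.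
Proof.
  intros dR a.
  assert (botj : join L (bot L) a = a) by (apply join_le_eq, bot_min).
  (* nabla <-> partialI (le _ a) *)
  assert (NP : forall b c, nabla L a b c -> forall x, le L (meet L b x) a -> le L (meet L c x) a).
  { intros b c E x H. eapply le_trans.
    - apply meet_intro; [|apply meet_r]. eapply le_trans; [apply meet_l|]. apply join_l.
    - unfold nabla in E. rewrite <- E.
      eapply le_trans; [apply meet_intro; [apply meet_r|apply meet_l]|].
      eapply le_trans; [apply distr; exact HK|]. apply join_intro.
      + eapply le_trans; [|exact H]. apply meet_intro; [apply meet_r|apply meet_l].
      + apply meet_r. }
  assert (PN1 : forall b c, (forall x, le L (meet L b x) a -> le L (meet L c x) a) ->
      forall x, meet L (join L b a) x = bot L -> meet L (join L c a) x = bot L).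
  { intros b c H x E. apply le_antisym; [|apply bot_min].
    assert (hb : le L (meet L b x) (bot L)).
    { rewrite <- E. apply meet_intro; [eapply le_trans; [apply meet_l|apply join_l]|apply meet_r]. }
    assert (ha : le L (meet L a x) (bot L)).
    { rewrite <- E. apply meet_intro; [eapply le_trans; [apply meet_l|apply join_r]|apply meet_r]. }
    assert (hc : le L (meet L c x) a) by (apply H; eapply le_trans; [exact hb|apply bot_min]).
    eapply le_trans; [apply meet_intro; [apply meet_r|apply meet_l]|].
    eapply le_trans; [apply distr; exact HK|]. apply join_intro.
    - eapply le_trans; [|exact ha]. apply meet_intro.
      + eapply le_trans; [|exact hc]. apply meet_intro; [apply meet_r|apply meet_l].
      + apply meet_l.
    - eapply le_trans; [|exact ha]. apply meet_intro; [apply meet_r|apply meet_l]. }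
  assert (PN : forall b c, (forall x, le L (meet L b x) a <-> le L (meet L c x) a) ->
      nabla L a b c).
  { intros b c H. apply dR. intro x; split; apply PN1; intro y; apply H. }
  assert (nsym : forall x y, nabla L a x y -> nabla L a y x) by (unfold nabla; auto).
  assert (nle : forall b c d, nabla L a b c -> le L b (join L d a) -> le L c (join L d a)).
  { intros b c d E H. eapply le_trans; [apply join_l|]. unfold nabla in E. rewrite <- E.
    apply join_intro; [exact H|apply join_r]. }
  split; [split|].
  - unfold congruence, nabla. split; [auto|]. split; [auto|]. split; [congruence|].
    split; [auto|]. split; [auto|]. split; [|split].
    + assert (M : forall b c d e, join L b a = join L c a -> join L d a = join L e a ->
                  le L (join L (meet L b d) a) (join L (meet L c e) a)).
      { intros b c d e E1 E2. apply join_intro; [|apply join_r].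
        eapply le_trans; [|apply K2; exact HK]. rewrite <- E1, <- E2.
        apply meet_intro.
        - eapply le_trans; [apply meet_l|apply join_l].
        - eapply le_trans; [apply meet_r|apply join_l]. }
      intros b c d e E1 E2. apply le_antisym; apply M; auto.
    + assert (M : forall b c d e, join L b a = join L c a -> join L d a = join L e a ->
                  le L (join L (join L b d) a) (join L (join L c e) a)).
      { intros b c d e E1 E2. apply join_intro; [|apply join_r]. apply join_intro.
        - eapply le_trans; [apply join_l|]. rewrite E1. apply join_intro; [|apply join_r].
          eapply le_trans; [|apply join_l]. apply join_l.
        - eapply le_trans; [apply join_l|]. rewrite E2. apply join_intro; [|apply join_r].
          eapply le_trans; [|apply join_l]. apply join_r. }
      intros b c d e E1 E2. apply le_antisym; apply M; auto.
    + intros S Ss H.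
      set (S1 := fun x => exists p, S p /\ x = fst p).
      set (S2 := fun x => exists p, S p /\ x = snd p).
      assert (s1 : small K S1) by (apply (small_image K HK _ _ S _ fst); auto).
      assert (s2 : small K S2) by (apply (small_image K HK _ _ S _ snd); auto).
      apply le_antisym; (apply join_intro; [|apply join_r]); apply sup_least; auto.
      * intros s [p [Sp ->]]. eapply le_trans; [apply join_l|]. rewrite (H p Sp).
        apply join_intro; [|apply join_r]. eapply le_trans; [|apply join_l].
        apply sup_ub; auto. exists p; auto.
      * intros s [p [Sp ->]]. eapply le_trans; [apply join_l|]. rewrite <- (H p Sp).
        apply join_intro; [|apply join_r]. eapply le_trans; [|apply join_l].
        apply sup_ub; auto. exists p; auto.
  - exists (fun x => le L x a). split.
    + split.
      * intros x y H1 H2; eapply le_trans; eauto.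
      * intros S _ H. exists a; split; [apply le_refl|auto].
    + intros b c; split.
      * intros E x; split; apply NP; auto.
      * apply PN.
  - intros b c H. apply PN. intro x.
    rewrite <- !join_le_eq. unfold nabla in H. rewrite botj in H. apply H.
Qed.
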